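(* Let $B_3$ be the braid group on three strands with standard generators $\sigma_1,\sigma_2$ (relation $\sigma_1\sigma_2\sigma_1=\sigma_2\sigma_1\sigma_2$). There is no element $a\in B_3$ satisfying $a^2=(\sigma_1\sigma_2)^{-1}$. Consequently none of the objects $\hat\alpha$, $\hat\beta=\sigma_1^{-1}\hat\alpha\sigma_1$, $|\hat\omega=\hat\alpha\sigma_1$, $\hat\omega|=\sigma_2\hat\alpha$, where $\hat\alpha$ is required to satisfy $\hat\alpha^2=(\sigma_1\sigma_2)^{-1}$, can be represented by a braid on three strands.
   Context: The objects $\hat\alpha,\hat\beta,|\hat\omega,\hat\omega|$ are formal markers inserted on the three strands of a leg to represent edge twists that are incompatible with the states of the two end vertices of the edge; consistency with compatible twists forces the relations $\hat\alpha^2=\sigma_2^{-1}\sigma_1^{-1}=(\sigma_1\sigma_2)^{-1}$, $\hat\beta=\sigma_1^{-1}\hat\alpha\sigma_1=\sigma_2\hat\alpha\sigma_2^{-1}$, $|\hat\omega=\hat\alpha\sigma_1$, $\hat\omega|=\sigma_2\hat\alpha$. Braid words are read top to bottom. *)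

(* Defs.v *)
(* The braid group B_3 given by its standard presentation
   < sigma_1, sigma_2 | sigma_1 sigma_2 sigma_1 = sigma_2 sigma_1 sigma_2 >,
   realised as words in the generators and their inverses modulo the
   congruence generated by free cancellation and the braid relation.
   Words are read left to right (= top to bottom); product is concatenation. *)
From Stdlib Require Import List.
Import ListNotations.

Inductive gen : Type := s1 | s2.

(* a letter: a generator together with a flag, [true] meaning its inverse *)
Definition letter : Type := (gen * bool)%type.
Definition word : Type := list letter.

Definition linv (x : letter) : letter := (fst x, negb (snd x)).

Definition wmul (u v : word) : word := u ++ v.
Definition winv (u : word) : word := rev (map linv u).
Definition wone : word := [].

Definition sigma1 : word := [(s1, false)].
Definition sigma2 : word := [(s2, false)].

Inductive beq : word -> word -> Prop :=
| beq_refl (w : word) : beq w w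
| beq_sym (u v : word) : beq u v -> beq v u
| beq_trans (u v w : word) : beq u v -> beq v w -> beq u w
| beq_cancel (u v : word) (x : letter) :
    beq (u ++ x :: linv x :: v) (u ++ v)
| beq_braid (u v : word) :
    beq (u ++ [(s1,false); (s2,false); (s1,false)] ++ v)
        (u ++ [(s2,false); (s1,false); (s2,false)] ++ v).

(* Main.v *)
Require Import Defs.
From Stdlib Require Import List ZArith Lia Bool.
Import ListNotations.

Inductive S3 := P012 | P102 | P021 | P210 | P120 | P201.

Definition img (p : S3) : nat * nat * nat :=
  match p with
  | P012 => (0,1,2) | P102 => (1,0,2) | P021 => (0,2,1)
  | P210 => (2,1,0) | P120 => (1,2,0) | P201 => (2,0,1) end%nat.

Definition ap (t : nat * nat * nat) (i : nat) : nat :=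
  match t with (a,b,c) => match i with 0 => a | 1 => b | _ => c end end.

Definition of_img (t : nat * nat * nat) : S3 :=
  match t with
  | (0,1,2) => P012 | (1,0,2) => P102 | (0,2,1) => P021
  | (2,1,0) => P210 | (1,2,0) => P120 | _ => P201 end%nat.

Definition mul (p q : S3) : S3 :=
  let f i := ap (img p) (ap (img q) i) in of_img (f 0, f 1, f 2)%nat.

Definition sgn (p : S3) : bool :=
  match p with P102 | P021 | P210 => true | _ => false end.

Definition gl (x : letter) : S3 := match fst x with s1 => P102 | s2 => P021 end.

Fixpoint h (w : word) : S3 :=
  match w with [] => P012 | x :: w' => mul (gl x) (h w') end.

Fixpoint es (w : word) : Z :=
  match w with [] => 0%Z | x :: w' => ((if snd x then (-1) else 1) + es w')%Z end.

Lemma mul_assoc x y z : mul x (mul y z) = mul (mul x y) z.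
Proof. destruct x, y, z; reflexivity. Qed.
Lemma mul_id x : mul P012 x = x.
Proof. destruct x; reflexivity. Qed.

Lemma h_app u v : h (u ++ v) = mul (h u) (h v).
Proof.
  induction u as [|x u IH]; simpl. now rewrite mul_id.
  now rewrite IH, mul_assoc.
Qed.

Lemma es_app u v : es (u ++ v) = (es u + es v)%Z.
Proof. induction u as [|x u IH]; simpl. lia. rewrite IH. lia. Qed.

Lemma beq_inv u v : beq u v -> h u = h v /\ es u = es v.
Proof.
  induction 1.
  - tauto.
  - destruct IHbeq; split; congruence.
  - destruct IHbeq1, IHbeq2; split; congruence.
  - rewrite !h_app, !es_app. destruct x as [g b]; cbn [linv fst snd].
    split.
    + cbn [h gl fst]; destruct g, (h u), (h v); reflexivity.
    + destruct b; cbn [es linv fst snd negb]; lia.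
  - rewrite !h_app, !es_app; cbn [app]. split.
    + destruct (h u), (h v); reflexivity.
    + cbn [es fst snd]. lia.
Qed.

Lemma sgn_es w : sgn (h w) = Z.odd (es w).
Proof.
  induction w as [|x w IH]; simpl. reflexivity.
  assert (E: sgn (mul (gl x) (h w)) = negb (sgn (h w))).
  { destruct x as [[] b]; simpl; destruct (h w); reflexivity. }
  rewrite E, IH, Z.odd_add.
  destruct (snd x); reflexivity.
Qed.

Lemma key X : ~ beq (X ++ X) (winv (wmul sigma1 sigma2)).
Proof.
  intro H. apply beq_inv in H. destruct H as [H1 H2].
  rewrite h_app in H1. rewrite es_app in H2. simpl in H1, H2.
  assert (E : es X = (-1)%Z) by lia.
  pose proof (sgn_es X) as S. rewrite E in S. simpl in S.
  destruct (h X); simpl in *; discriminate.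
Qed.

Theorem mainTheorem3 :
  (* no a in B_3 with a^2 = (sigma1 sigma2)^{-1} *)
  (forall a : word,
      ~ beq (wmul a a) (winv (wmul sigma1 sigma2))) /\
  (* hat-beta = sigma1^{-1} hat-alpha sigma1 is not a braid:
     no b with (sigma1 b sigma1^{-1})^2 = (sigma1 sigma2)^{-1} *)
  (forall b : word,
      ~ beq (wmul (wmul (wmul sigma1 b) (winv sigma1))
                  (wmul (wmul sigma1 b) (winv sigma1)))
            (winv (wmul sigma1 sigma2))) /\
  (* |hat-omega = hat-alpha sigma1 is not a braid:
     no c with (c sigma1^{-1})^2 = (sigma1 sigma2)^{-1} *)
  (forall c : word,
      ~ beq (wmul (wmul c (winv sigma1)) (wmul c (winv sigma1)))
            (winv (wmul sigma1 sigma2))) /\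
  (* hat-omega| = sigma2 hat-alpha is not a braid:
     no d with (sigma2^{-1} d)^2 = (sigma1 sigma2)^{-1} *)
  (forall d : word,
      ~ beq (wmul (wmul (winv sigma2) d) (wmul (winv sigma2) d))
            (winv (wmul sigma1 sigma2))).
Proof.
  repeat split; intros; apply key.
Qed.
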